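(* Fix a level $\ell<K$. Let $\tilde{\boldsymbol\theta}\in\mathbb R^{\mathcal Z^*}$ be such that $\boldsymbol\mu=\tilde{\boldsymbol p}(\tilde{\boldsymbol\theta})$ is coherent among all levels $k>\ell$. Then for every $t\in\mathbb R$ and every node $y\in\mathcal Y^*$ with $\mathrm{level}(y)\le\ell$, the vector $\boldsymbol\mu'=\tilde{\boldsymbol p}(\tilde{\boldsymbol\theta}+t\,\mathbf a_y)$ is also coherent among all levels $k>\ell$, where $\mathbf a_y$ denotes the column of $\mathbf A$ indexed by $y$.
   Context: Fix an integer $K\ge1$. Let $T^*$ be the complete binary tree of depth $K$ whose nodes are intervals: the root (level $0$) has $I_{\mathit{root}}=[0,1)$, and each node $z$ at level $k<K$ with $I_z=[\alpha_z,\beta_z)$ has children $\mathrm{left}(z)$, $\mathrm{right}(z)$ at level $k+1$ with intervals $[\alpha_z,\frac{\alpha_z+\beta_z}2)$ and $[\frac{\alpha_z+\beta_z}2,\beta_z)$. Let $\mathcal Z^*$ be its node set, $\mathcal Z_k$ the nodes at level $k$, $\mathrm{level}(z)$ the level of $z$, and $\mathcal Y^*=\mathcal Z^*\setminus\mathcal Z_K$. Fix liquidity parameters $b_k>0$ ($k=0,\dots,K$) and set $B_\ell=\sum_{k=\ell+1}^K b_k$. For $\tilde{\boldsymbol\theta}\in\mathbb R^{\mathcal Z^*}$, $\tilde p_z(\tilde{\boldsymbol\theta})=e^{\tilde\theta_z/b_k}/\sum_{z'\in\mathcal Z_k}e^{\tilde\theta_{z'}/b_k}$ for $z\in\mathcal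 Z_k$. The constraint matrix $\mathbf A\in\mathbb R^{\mathcal Z^*\times\mathcal Y^*}$ has entries $A_{zy}=B_{\mathrm{level}(z)}$ if $z=y$, $-b_{\mathrm{level}(z)}$ if $I_z\subsetneq I_y$, and $0$ otherwise. A vector $\boldsymbol\mu\in\mathbb R^{\mathcal Z^*}$ is coherent among a set $L$ of levels if for all $k,m\in L$ with $k<m$ and all $z\in\mathcal Z_k$, $\mu_z=\sum_{u\in\mathcal Z_m:\ I_u\subseteq I_z}\mu_u$. *)

(* Defs.v *)
From HB Require Import structures.
From mathcomp Require Import all_boot all_order all_algebra.
From mathcomp Require Import boolp reals.
From mathcomp Require Import sequences exp.
Set Implicit Arguments. Unset Strict Implicit. Unset Printing Implicit Defensive.
Import Order.TTheory GRing.Theory Num.Theory.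
Local Open Scope ring_scope.

(* Nodes of the complete binary tree T^* of depth K: a node at level k (0<=k<=K)
   is indexed by j < 2^k. *)
Definition node (K : nat) := {k : 'I_K.+1 & 'I_(2 ^ k)}.

Definition level {K : nat} (z : node K) : nat := val (tag z).
Definition idx {K : nat} (z : node K) : nat := val (tagged z).

Section Tree.
Variables (R : realType) (K : nat).

(* I_z = [alpha_z, beta_z) = [j/2^k, (j+1)/2^k): the closed form of the
   recursive halving construction starting from [0,1). *)
Definition alpha (z : node K) : R := (idx z)%:R / (2 ^ level z)%:R.
Definition beta (z : node K) : R := (idx z).+1%:R / (2 ^ level z)%:R.

Definition inI (z : node K) (x : R) : Prop := alpha z <= x /\ x < beta z.

Definition subI (u z : node K) : Prop := forall x : R, inI u x -> inI z x.
Definition ssubI (u z : node K) : Prop := subI u z /\ ~ subI z u.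

Definition Bsum (b : nat -> R) (l : nat) : R := \sum_(l.+1 <= k < K.+1) (b k).

(* Entry A_{zy} of the constraint matrix (y is meant to range over Y-star). *)
Definition Amat (b : nat -> R) (z y : node K) : R :=
  if z == y then Bsum b (level z)
  else if asbool (ssubI z y) then - b (level z) else 0.

Definition ptilde (b : nat -> R) (theta : node K -> R) (z : node K) : R :=
  expR (theta z / b (level z)) /
  \sum_(z' : node K | level z' == level z) expR (theta z' / b (level z)).

Definition coherent (L : nat -> Prop) (mu : node K -> R) : Prop :=
  forall k m : nat, L k -> L m -> (k < m)%N ->
  forall z : node K, level z = k ->
    mu z = \sum_(u : node K | (level u == m) && asbool (subI u z)) mu u.

End Tree.

(* Main.v *)
Require Import Defs.
From HB Require Import structures.
From mathcomp Require Import all_boot all_order all_algebra.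
From mathcomp Require Import boolp reals.
From mathcomp Require Import sequences exp.
From mathcomp Require Import zify ring lra.
Import Order.TTheory GRing.Theory Num.Theory.
Local Open Scope ring_scope.

Section Geo.
Variables (R : realType) (K : nat).

Lemma pow2_gt0 n : (0 : R) < (2 ^ n)%:R.
Proof. by rewrite ltr0n expn_gt0. Qed.

Lemma frac_scale (j l n : nat) : (l <= n)%N ->
  j%:R / (2 ^ l)%:R = (j * 2 ^ (n - l))%:R / (2 ^ n)%:R :> R.
Proof.
move=> h; have -> : (2 ^ n = 2 ^ l * 2 ^ (n - l))%N by rewrite -expnD subnKC.
have h1 := pow2_gt0 l; have h2 := pow2_gt0 (n - l).
rewrite !natrM; field; apply/andP; split; exact: lt0r_neq0.
Qed.

Lemma frac_le (i j n : nat) :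
  (i%:R / (2 ^ n)%:R <= j%:R / (2 ^ n)%:R :> R) = (i <= j)%N.
Proof. by rewrite ler_pM2r ?invr_gt0 ?pow2_gt0 // ler_nat. Qed.

Lemma frac_lt (i j n : nat) :
  (i%:R / (2 ^ n)%:R < j%:R / (2 ^ n)%:R :> R) = (i < j)%N.
Proof. by rewrite ltr_pM2r ?invr_gt0 ?pow2_gt0 // ltr_nat. Qed.

Lemma inI_pt (u : node K) n i : (level u <= n)%N ->
  inI u (i%:R / (2 ^ n)%:R : R) <->
  (idx u * 2 ^ (n - level u) <= i < (idx u).+1 * 2 ^ (n - level u))%N.
Proof.
move=> h; rewrite /inI /alpha /beta (frac_scale (idx u) _ _ h) (frac_scale (idx u).+1 _ _ h).
rewrite frac_le frac_lt; split => [[-> ->] //|/andP[-> ->]] //.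
Qed.

Lemma nat_key1 a c P Q : (0 < P)%N -> (c * (P * Q) <= a * P)%N ->
  ((a.+1 * P).-1 < c.+1 * (P * Q))%N -> (c * Q <= a)%N /\ (a < c.+1 * Q)%N.
Proof.
move=> hP h1 h2; split.
  by rewrite -(leq_pmul2r hP) mulnAC -mulnA.
have h3 : (a.+1 * P <= c.+1 * Q * P)%N.
  rewrite mulnAC -mulnA; move: h2; case: (a.+1 * P)%N => //.
by rewrite leq_pmul2r in h3.
Qed.

Lemma nat_key2 a c P Q : (0 < P)%N -> (1 < Q)%N -> (c * P <= a * (P * Q))%N ->
  ((a.+1 * (P * Q)).-1 < c.+1 * P)%N -> False.
Proof.
move=> hP hQ h1 h2.
have h3 : (c * P <= a * Q * P)%N by rewrite mulnAC -mulnA.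
rewrite leq_pmul2r // in h3.
have h4 : (a.+1 * Q * P <= c.+1 * P)%N.
  rewrite mulnAC -mulnA; move: h2; case: (a.+1 * (P * Q))%N => //.
rewrite leq_pmul2r // in h4.
nia.
Qed.

Lemma subI_char (u z : node K) : subI R u z <->
  (level z <= level u)%N /\ (idx u %/ 2 ^ (level u - level z) = idx z)%N.
Proof.
split; last first.
  move=> [hl hd] x [h1 h2]; split.
    apply: le_trans h1; rewrite /alpha (frac_scale (idx z) _ _ hl) frac_le -hd.
    exact: leq_divM.
  apply: lt_le_trans h2 _; rewrite /beta (frac_scale (idx z).+1 _ _ hl) frac_le -hd.
  have := ltnSn (idx u %/ 2 ^ (level u - level z))%N.
  by rewrite ltn_divLR ?expn_gt0.
move=> hs.
have hu1 : (level u <= level u + level z)%N by rewrite leq_addr.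
have hz1 : (level z <= level u + level z)%N by rewrite leq_addl.
have P0 : (0 < 2 ^ level z)%N by rewrite expn_gt0.
have Pu : (0 < 2 ^ level u)%N by rewrite expn_gt0.
have A1 := fun H => proj1 (inI_pt z _ (idx u * 2 ^ level z) hz1)
  (hs _ (proj2 (inI_pt u _ (idx u * 2 ^ level z) hu1) H)).
have A2 := fun H => proj1 (inI_pt z _ ((idx u).+1 * 2 ^ level z).-1 hz1)
  (hs _ (proj2 (inI_pt u _ ((idx u).+1 * 2 ^ level z).-1 hu1) H)).
rewrite addKn addnK in A1 A2.
have /andP[B1 _] := A1 ltac:(rewrite leqnn /= mulSn; nia).
have /andP[_ B2] := A2 ltac:(rewrite mulSn; apply/andP; split; nia).
case: (leqP (level z) (level u)) => hl.
  split => //.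
  have E : (2 ^ level u = 2 ^ level z * 2 ^ (level u - level z))%N
    by rewrite -expnD subnKC.
  rewrite E in B1 B2.
  have [C1 C2] := nat_key1 _ _ _ _ P0 B1 B2.
  apply/eqP; rewrite eqn_leq leq_divRL ?expn_gt0 // C1 andbT.
  by rewrite -ltnS ltn_divLR ?expn_gt0.
exfalso.
have E : (2 ^ level z = 2 ^ level u * 2 ^ (level z - level u))%N
  by rewrite -expnD subnKC // ltnW.
rewrite E in B1 B2.
apply: (nat_key2 _ _ _ _ Pu _ B1 B2).
by rewrite -{1}(expn0 2) ltn_exp2l // subn_gt0.
Qed.


Lemma node_eq (z w : node K) : level z = level w -> idx z = idx w -> z = w.
Proof.
case: z => [kz jz]; case: w => [kw jw]; rewrite /level /idx /= => /val_inj ek.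
by subst kw => /val_inj ->.
Qed.

Lemma parent_ex (u : node K) k : (k <= level u)%N ->
  exists z : node K, level z = k /\ idx z = (idx u %/ 2 ^ (level u - k))%N.
Proof.
move=> h.
have hk : (k < K.+1)%N by apply: (leq_ltn_trans h (ltn_ord (tag u))).
have hj : (idx u %/ 2 ^ (level u - k) < 2 ^ k)%N.
  by rewrite ltn_divLR ?expn_gt0 // -expnD subnKC //; exact: (ltn_ord (tagged u)).
by exists (existT (fun k0 : 'I_K.+1 => 'I_(2 ^ k0)) (Ordinal hk) (Ordinal hj)).
Qed.

Lemma ssubI_lt (z y : node K) : (level y < level z)%N ->
  (ssubI R z y <-> subI R z y).
Proof.
move=> h; split => [[]//|hs]; split => // /subI_char [hl _].
by rewrite leqNgt h in hl.
Qed.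

Lemma F1 (u z y : node K) : (level y < level z)%N -> (level z <= level u)%N ->
  subI R u z -> (ssubI R u y <-> ssubI R z y).
Proof.
move=> hy hz huz.
have e1 := ssubI_lt u y (leq_trans hy hz).
have e2 := ssubI_lt z y hy.
split => [/e1 h | /e2 h]; [apply/e2 | apply/e1]; last first.
  by move=> x /huz /h.
move: huz h => /subI_char [h1 h2] /subI_char [h3 h4].
apply/subI_char; split; first exact: ltnW.
rewrite -h2 -divnMA -expnD -h4; congr (_ %/ 2 ^ _)%N; lia.
Qed.

Lemma sum_split (f : node K -> R) k m : (k <= m)%N ->
  \sum_(u | level u == m) f u =
  \sum_(z | level z == k) \sum_(u | (level u == m) && asbool (subI R u z)) f u.
Proof.
move=> hkm.
rewrite (exchange_big_dep (fun u : node K => level u == m)) /=; last first.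
  by move=> z u _ /andP[].
apply: eq_bigr => u /eqP hu.
have [z0 [h1 h2]] := parent_ex u k ltac:(by rewrite hu).
rewrite (big_pred1 z0) // => z /=.
apply/idP/eqP => [/andP[/eqP hz /andP[_ /asboolP /subI_char [_ hd]]] | ->].
  by apply: node_eq; [rewrite hz h1 | rewrite h2 -hd hz].
rewrite h1 eqxx hu eqxx /=; apply/asboolP/subI_char; rewrite h1 hu h2; split=> //.
by rewrite hu.
Qed.

End Geo.

Theorem lemma2 (R : realType) (K : nat) (hK : (1 <= K)%N)
  (b : nat -> R) (hb : forall k : nat, (k <= K)%N -> 0 < b k)
  (l : nat) (hl : (l < K)%N) (theta : node K -> R) :
  coherent (fun k => (l < k <= K)%N) (ptilde b theta) ->
  forall (t : R) (y : node K), (level y <= l)%N ->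
    coherent (fun k => (l < k <= K)%N)
      (ptilde b (fun z => theta z + t * Amat b z y)).
Proof.
move=> hcoh t y hy.
pose c (w : node K) : R := expR (- (if asbool (ssubI R w y) then t else 0)).
have hE : forall w w' : node K, (l < level w)%N -> level w' = level w ->
    expR ((theta w' + t * Amat b w' y) / b (level w))
    = expR (theta w' / b (level w)) * c w'.
  move=> w w' hw hw'; rewrite /c -expRD; congr expR; rewrite /Amat.
  have -> : (w' == y) = false.
    by apply/negbTE/eqP => e; subst w'; move: hw'; lia.
  have hb0 : b (level w) != 0.
    by apply: lt0r_neq0; apply: hb; exact: (ltn_ord (tag w)).
  case: (asbool _); rewrite ?hw'; last by rewrite mulr0 addr0 subr0.
  by field.
have hp' : forall w : node K, (l < level w)%N ->
    ptilde b (fun z => theta z + t * Amat b z y) w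
    = ptilde b theta w * c w /
      \sum_(w' | level w' == level w) ptilde b theta w' * c w'.
  move=> w hw.
  rewrite (eq_bigr (fun w' => expR (theta w' / b (level w)) /
     (\sum_(z' | level z' == level w) expR (theta z' / b (level w))) * c w'));
    last by move=> w' /eqP hw'; rewrite /ptilde hw'.
  rewrite /ptilde /=.
  rewrite (eq_bigr (fun z' => expR (theta z' / b (level w)) * c z')); last by move=> z' /eqP hz'; rewrite (hE w z' hw hz').
  rewrite hE // [X in _ = _ / X](eq_bigr (fun i => expR (theta i / b (level w)) * c i / \sum_(z' | level z' == level w) expR (theta z' / b (level w)))); last by move=> i _; rewrite mulrAC.
  rewrite -mulr_suml.
  have hD : 0 < \sum_(z' | level z' == level w) expR (theta z' / b (level w)).
    rewrite (bigD1 w) //=.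
    have := expR_gt0 (theta w / b (level w)).
    have : 0 <= \sum_(i | (level i == level w) && (i != w))
                  expR (theta i / b (level w)).
      by apply: sumr_ge0 => i _; apply: ltW; apply: expR_gt0.
    lra.
  have hD' : 0 < \sum_(z' | level z' == level w)
                   expR (theta z' / b (level w)) * c z'.
    rewrite (bigD1 w) //=.
    have := mulr_gt0 (expR_gt0 (theta w / b (level w))) (expR_gt0 (- (if asbool (ssubI R w y) then t else 0))).
    have : 0 <= \sum_(i | (level i == level w) && (i != w))
                  expR (theta i / b (level w)) * c i.
      by apply: sumr_ge0 => i _; apply: ltW; apply: mulr_gt0; apply: expR_gt0.
    rewrite /c; lra.
  have hc : 0 < c w by apply: expR_gt0.
  field; apply/andP; split; apply: lt0r_neq0 => //.
move=> k m /andP[hk1 hk2] /andP[hm1 hm2] hkm z hz.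
have hL : forall j, (l < j)%N -> (j <= K)%N -> (l < j <= K)%N.
  by move=> j h1 h2; rewrite h1 h2.
have hcoh' := hcoh _ _ (hL _ hk1 hk2) (hL _ hm1 hm2) hkm.
have hr : \sum_(w' | level w' == m) ptilde b theta w' * c w'
        = \sum_(w' | level w' == k) ptilde b theta w' * c w'.
  rewrite (sum_split _ _ _ k m (ltnW hkm)); apply: eq_bigr => z' /eqP hz'.
  rewrite (eq_bigr (fun u => ptilde b theta u * c z')); last first.
    move=> u /andP[/eqP hu /asboolP hs]; congr (_ * _); rewrite /c.
    rewrite (asbool_equiv_eq (@F1 R K u z' y _ _ hs)) //.
      by rewrite hz'; exact: leq_ltn_trans hy hk1.
    by rewrite hz' hu; exact: ltnW.
  by rewrite -mulr_suml -hcoh'.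
rewrite hp' ?hz //.
rewrite [in RHS](eq_bigr (fun u => ptilde b theta u * c z /
    \sum_(w' | level w' == m) ptilde b theta w' * c w')); last first.
  move=> u /andP[/eqP hu /asboolP hs]; rewrite hp' ?hu //; congr (_ * _ / _).
  rewrite /c (asbool_equiv_eq (@F1 R K u z y _ _ hs)) //.
    by rewrite hz; exact: leq_ltn_trans hy hk1.
  by rewrite hz hu; exact: ltnW.
rewrite -!mulr_suml -hcoh'.
  by congr (_ / _); rewrite -hr.
exact: hz.
Qed.
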